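(* Let $G$ be a finitely generated, torsion-free, residually finite group and $F$ a group generated by its torsion elements. Then $\operatorname{Spec}_R(G\times F)=\operatorname{Spec}_R(G)\cdot\operatorname{Spec}_R(F)$.
   Context: $R(\psi)$ is the Reidemeister number of an endomorphism $\psi$ of a group $A$ (number of classes of $x\sim gx\psi(g)^{-1}$), $\operatorname{Spec}_R(A)=\{R(\psi)\mid\psi\in\operatorname{Aut}(A)\}$, and for $S,T\subseteq\mathbb{N}\cup\{\infty\}$, $S\cdot T=\{st\mid s\in S,t\in T\}$ with $a\cdot\infty=\infty$. *)

(* Defs.v *)
From Stdlib Require Import List Arith.
Import ListNotations.
Set Implicit Arguments.

Record group := Group {
  carrier :> Type;
  gmul : carrier -> carrier -> carrier;
  ginv : carrier -> carrier;
  gone : carrier;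
  gmulA : forall x y z, gmul x (gmul y z) = gmul (gmul x y) z;
  gmul1l : forall x, gmul gone x = x;
  gmul1r : forall x, gmul x gone = x;
  gmulVl : forall x, gmul (ginv x) x = gone;
  gmulVr : forall x, gmul x (ginv x) = gone
}.
Arguments gmul {g}. Arguments ginv {g}. Arguments gone {g}.

Section Prod.
Variables G F : group.
Definition pmul (x y : G * F) : G * F := (gmul (fst x) (fst y), gmul (snd x) (snd y)).
Definition pinv (x : G * F) : G * F := (ginv (fst x), ginv (snd x)).
Definition pone : G * F := (gone, gone).
Lemma pmulA x y z : pmul x (pmul y z) = pmul (pmul x y) z.
Proof. destruct x, y, z; unfold pmul; simpl; rewrite !gmulA; reflexivity. Qed.
Lemma pmul1l x : pmul pone x = x.
Proof. destruct x; unfold pmul; simpl; rewrite !gmul1l; reflexivity. Qed.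
Lemma pmul1r x : pmul x pone = x.
Proof. destruct x; unfold pmul; simpl; rewrite !gmul1r; reflexivity. Qed.
Lemma pmulVl x : pmul (pinv x) x = pone.
Proof. destruct x; unfold pmul; simpl; rewrite !gmulVl; reflexivity. Qed.
Lemma pmulVr x : pmul x (pinv x) = pone.
Proof. destruct x; unfold pmul; simpl; rewrite !gmulVr; reflexivity. Qed.
Definition prod_group : group :=
  @Group (G * F)%type pmul pinv pone pmulA pmul1l pmul1r pmulVl pmulVr.
End Prod.

Section Notions.
Variable G : group.

Fixpoint gpow (x : G) (n : nat) : G :=
  match n with O => gone | S k => gmul x (gpow x k) end.

Inductive generated (S : G -> Prop) : G -> Prop :=
| gen_in x : S x -> generated S x
| gen_one : generated S gone
| gen_mul x y : generated S x -> generated S y -> generated S (gmul x y)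
| gen_inv x : generated S x -> generated S (ginv x).

Definition finitely_generated : Prop :=
  exists l : list G, forall x, generated (fun y => In y l) x.

Definition torsion_elt (x : G) : Prop := exists n, 0 < n /\ gpow x n = gone.

Definition torsion_free : Prop := forall x : G, torsion_elt x -> x = gone.

Definition generated_by_torsion : Prop := forall x : G, generated torsion_elt x.

Definition normal_subgroup (N : G -> Prop) : Prop :=
  N gone /\ (forall x y, N x -> N y -> N (gmul x y)) /\ (forall x, N x -> N (ginv x))
  /\ (forall g x, N x -> N (gmul (gmul g x) (ginv g))).

Definition finite_index (N : G -> Prop) : Prop :=
  exists l : list G, forall g, exists h, In h l /\ N (gmul (ginv h) g).

Definition residually_finite : Prop :=
  forall x : G, x <> gone ->
    exists N, normal_subgroup N /\ finite_index N /\ ~ N x.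

Definition endomorphism (psi : G -> G) : Prop :=
  forall x y, psi (gmul x y) = gmul (psi x) (psi y).

Definition automorphism (psi : G -> G) : Prop :=
  endomorphism psi /\ (forall x y, psi x = psi y -> x = y) /\ (forall y, exists x, psi x = y).

Definition twisted (psi : G -> G) (x y : G) : Prop :=
  exists g, y = gmul (gmul g x) (ginv (psi g)).

Definition n_classes (psi : G -> G) (n : nat) : Prop :=
  exists l : list G, length l = n /\
    (forall i j, i < n -> j < n -> twisted psi (nth i l gone) (nth j l gone) -> i = j) /\
    (forall x, exists i, i < n /\ twisted psi (nth i l gone) x).

(* Reidemeister number with values in N ∪ {∞}; None stands for ∞ *)
Definition reidemeister (psi : G -> G) (r : option nat) : Prop :=
  match r with
  | Some n => n_classes psi n
  | None => forall n, ~ n_classes psi n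
  end.

Definition SpecR (r : option nat) : Prop :=
  exists psi, automorphism psi /\ reidemeister psi r.
End Notions.

Definition omul (a b : option nat) : option nat :=
  match a, b with Some m, Some n => Some (m * n) | _, _ => None end.

Definition set_mul (S T : option nat -> Prop) : option nat -> Prop :=
  fun r => exists s t, S s /\ T t /\ r = omul s t.

(* Main.v *)
Require Import Defs.
From Stdlib Require Import List Arith Lia ClassicalEpsilon.
Import ListNotations.

Arguments gmulA {g} x y z. Arguments gmul1l {g} x. Arguments gmul1r {g} x.
Arguments gmulVl {g} x. Arguments gmulVr {g} x.
Arguments gpow {G} x n. Arguments pmul {G F} x y. Arguments pinv {G F} x. Arguments pone {G F}. Arguments twisted {G} psi x y. Arguments n_classes {G} psi n.
Arguments endomorphism {G} psi. Arguments automorphism {G} psi.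
Arguments generated {G} S _. Arguments torsion_elt {G} x.
Arguments reidemeister {G} psi r. Arguments normal_subgroup {G} N. Arguments finite_index {G} N.
Notation "x ⋅ y" := (gmul x y) (at level 40, left associativity).

Section GroupLemmas.
Context {G : group}.
Implicit Types x y z : G.

Lemma mulKr x y : y ⋅ x ⋅ ginv x = y.
Proof. rewrite <- gmulA, gmulVr, gmul1r. reflexivity. Qed.
Lemma mulVKr x y : y ⋅ ginv x ⋅ x = y.
Proof. rewrite <- gmulA, gmulVl, gmul1r. reflexivity. Qed.
Lemma mulcanl x y z : x ⋅ y = x ⋅ z -> y = z.
Proof. intro H. rewrite <- (gmul1l y), <- (gmul1l z), <- (gmulVl x), <- !gmulA, H. reflexivity. Qed.
Lemma mulcanr x y z : y ⋅ x = z ⋅ x -> y = z.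
Proof. intro H. rewrite <- (mulKr x y), <- (mulKr x z), H. reflexivity. Qed.
Lemma inv_uniq x y : x ⋅ y = gone -> ginv x = y.
Proof. intro H. apply (mulcanl x). rewrite gmulVr, H. reflexivity. Qed.
Lemma inv_inv x : ginv (ginv x) = x.
Proof. apply inv_uniq. apply gmulVl. Qed.
Lemma inv_one : ginv (gone : G) = gone.
Proof. apply inv_uniq. apply gmul1l. Qed.
Lemma inv_mul x y : ginv (x ⋅ y) = ginv y ⋅ ginv x.
Proof. apply inv_uniq. rewrite !gmulA, mulKr, gmulVr. reflexivity. Qed.
Lemma mul_eq_one x y : x ⋅ ginv y = gone -> x = y.
Proof. intro H. rewrite <- (mulVKr y x), H, gmul1l. reflexivity. Qed.
End GroupLemmas.

Ltac gs := repeat (rewrite ?gmulA, ?gmulVl, ?gmulVr, ?gmul1l, ?gmul1r, ?mulKr, ?mulVKr,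
   ?inv_mul, ?inv_inv, ?inv_one).

Section HomLemmas.
Context {G H : group} {f : G -> H}.
Hypothesis hf : forall x y, f (x ⋅ y) = f x ⋅ f y.
Lemma hom_one : f gone = gone.
Proof. apply (mulcanl (f gone)). rewrite <- hf, !gmul1r. reflexivity. Qed.
Lemma hom_inv x : f (ginv x) = ginv (f x).
Proof. symmetry. apply inv_uniq. rewrite <- hf, gmulVr. apply hom_one. Qed.
End HomLemmas.

Lemma hom_pow {G : group} {f : G -> G} : endomorphism f -> forall x n, f (gpow x n) = gpow (f x) n.
Proof. intros hf x n. induction n; simpl. apply (hom_one hf). rewrite hf, IHn. reflexivity. Qed.

Section Twist.
Context {G : group} {psi : G -> G}.
Hypothesis hpsi : endomorphism psi.
Lemma tw_refl x : twisted psi x x.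
Proof. exists gone. rewrite (hom_one hpsi). gs. reflexivity. Qed.
Lemma tw_sym x y : twisted psi x y -> twisted psi y x.
Proof. intros [g ->]. exists (ginv g). rewrite (hom_inv hpsi). gs. reflexivity. Qed.
Lemma tw_trans x y z : twisted psi x y -> twisted psi y z -> twisted psi x z.
Proof. intros [g ->] [h ->]. exists (h ⋅ g). rewrite hpsi. gs. reflexivity. Qed.
End Twist.

Definition sepcov {A} (R : A -> A -> Prop) (l : list A) :=
  NoDup l /\ (forall u v, In u l -> In v l -> R u v -> u = v) /\ (forall x, exists u, In u l /\ R u x).

Section Counting.
Context {A : Type} {R : A -> A -> Prop}.
Hypothesis Rr : forall x, R x x.
Hypothesis Rs : forall x y, R x y -> R y x.
Hypothesis Rt : forall x y z, R x y -> R y z -> R x z.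

Lemma cover_sep_aux (l : list A) : exists l', NoDup l' /\ (forall u v, In u l' -> In v l' -> R u v -> u = v)
  /\ (forall y, In y l -> exists u, In u l' /\ R u y).
Proof.
  induction l as [|a l IH].
  - exists []. split. constructor. split. intros u v []. intros y [].
  - destruct IH as [l' [H1 [H2 H3]]].
    destruct (classic (exists u, In u l' /\ R u a)) as [[u [Hu Hua]]|Hn].
    + exists l'. split; [assumption|split;[assumption|]]. intros y [<-|Hy]. eauto. auto.
    + exists (a :: l'). split; [|split].
      * constructor; [|assumption]. intro Ha. apply Hn. eauto.
      * intros u v [<-|Hu] [<-|Hv] Huv; auto.
        -- exfalso; apply Hn; eauto.
        -- exfalso; apply Hn; eauto.
      * intros y [<-|Hy]. exists a. split. left; auto. auto.
        destruct (H3 y Hy) as [u [? ?]]. exists u. split. right; auto. auto.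
Qed.

Lemma cover_sep : (exists l, forall x, exists u, In u l /\ R u x) -> exists l', sepcov R l'.
Proof.
  intros [l Hl]. destruct (cover_sep_aux l) as [l' [H1 [H2 H3]]].
  exists l'. split; [assumption|split;[assumption|]].
  intros x. destruct (Hl x) as [u [Hu Hux]]. destruct (H3 u Hu) as [v [Hv Hvu]]. eauto.
Qed.

Lemma NoDup_map_inj {B} (f : A -> B) (l : list A) :
  (forall x y, In x l -> In y l -> f x = f y -> x = y) -> NoDup l -> NoDup (map f l).
Proof.
  induction l as [|a l IH]; intros Hi Hn; simpl. constructor.
  inversion Hn; subst. constructor.
  - intro Hin. apply in_map_iff in Hin. destruct Hin as [x [Hx Hxl]].
    assert (x = a) by (apply Hi; simpl; auto). subst. contradiction.
  - apply IH; auto. intros; apply Hi; simpl; auto.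
Qed.

Lemma sep_le l1 l2 : sepcov R l1 -> sepcov R l2 -> length l1 <= length l2.
Proof.
  intros [N1 [S1 C1]] [N2 [S2 C2]].
  destruct l1 as [|a l1']. simpl; lia.
  set (f := fun u => epsilon (inhabits a) (fun v => In v l2 /\ R v u)).
  assert (Hf : forall u, In (f u) l2 /\ R (f u) u).
  { intro u. apply epsilon_spec. apply C2. }
  rewrite <- (length_map f (a :: l1')). apply NoDup_incl_length.
  - apply NoDup_map_inj; auto. intros x y Hx Hy Hxy.
    apply S1; auto. destruct (Hf x) as [_ H1]. destruct (Hf y) as [_ H2].
    rewrite Hxy in H1. eauto.
  - intros v Hv. apply in_map_iff in Hv. destruct Hv as [u [<- _]]. apply Hf.
Qed.

Lemma sep_len l1 l2 : sepcov R l1 -> sepcov R l2 -> length l1 = length l2.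
Proof. intros. apply Nat.le_antisymm; apply sep_le; auto. Qed.

Variable d : A.
Lemma nth_sep n : (exists l, length l = n /\
    (forall i j, i < n -> j < n -> R (nth i l d) (nth j l d) -> i = j) /\
    (forall x, exists i, i < n /\ R (nth i l d) x)) <-> exists l, length l = n /\ sepcov R l.
Proof.
  split.
  - intros [l [Hn [H1 H2]]]. exists l. split; [auto|]. split; [|split].
    + apply (NoDup_nth l d). intros i j Hi Hj E. apply H1; try lia. rewrite E. apply Rr.
    + intros u v Hu Hv Huv. apply (In_nth l u d) in Hu. apply (In_nth l v d) in Hv.
      destruct Hu as [i [Hi <-]]. destruct Hv as [j [Hj <-]].
      assert (i = j) by (apply H1; try lia; auto). subst; auto.
    + intros x. destruct (H2 x) as [i [Hi Hx]]. exists (nth i l d). split; auto. apply nth_In. lia.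
  - intros [l [Hn [H1 [H2 H3]]]]. exists l. split; [auto|split].
    + intros i j Hi Hj E. apply (proj1 (NoDup_nth l d) H1); try lia.
      apply H2; auto; apply nth_In; lia.
    + intros x. destruct (H3 x) as [u [Hu Hux]]. apply (In_nth l u d) in Hu.
      destruct Hu as [i [Hi E]]. exists i. split. lia. rewrite E; auto.
Qed.
End Counting.

Lemma ncl_iff (G : group) (psi : G -> G) (hpsi : endomorphism psi) n :
  n_classes psi n <-> exists l, length l = n /\ sepcov (twisted psi) l.
Proof. apply (nth_sep (tw_refl hpsi)). Qed.

Lemma ncl_cover (G : group) (psi : G -> G) (hpsi : endomorphism psi) :
  (exists l, forall x, exists u, In u l /\ twisted psi u x) -> exists n, n_classes psi n.
Proof.
  intro H. destruct (cover_sep (tw_refl hpsi) (tw_sym hpsi) (tw_trans hpsi) H) as [l Hl].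
  exists (length l). apply ncl_iff; eauto.
Qed.

Lemma ncl_unique (G : group) (psi : G -> G) (hpsi : endomorphism psi) n m :
  n_classes psi n -> n_classes psi m -> n = m.
Proof.
  intros Hn Hm. apply ncl_iff in Hn; auto. apply ncl_iff in Hm; auto.
  destruct Hn as [l1 [<- H1]]. destruct Hm as [l2 [<- H2]].
  eapply sep_len; eauto; [apply (tw_sym hpsi)|apply (tw_trans hpsi)].
Qed.
Arguments ncl_iff {G psi} hpsi n. Arguments ncl_cover {G psi} hpsi _. Arguments ncl_unique {G psi} hpsi {n m}.


Section Tri.
Variables G F : group.
Variable phi : G -> G.
Variable alpha : F -> F.
Variable delta : G -> F.
Variable psi : prod_group G F -> prod_group G F.
Hypothesis hphi : endomorphism phi.
Hypothesis halpha : endomorphism alpha.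
Hypothesis hdelta : forall x y, delta (x ⋅ y) = delta x ⋅ delta y.
Hypothesis hpsi : endomorphism psi.
Hypothesis Hpsi : forall g f, psi (g, f) = (phi g, delta g ⋅ alpha f).

Lemma tri_char a b x y : twisted psi ((a, b) : prod_group G F) (x, y) <->
  exists g h, x = g ⋅ a ⋅ ginv (phi g) /\ y = h ⋅ b ⋅ ginv (alpha h) ⋅ ginv (delta g).
Proof.
  split.
  - intros [[g h] E]. rewrite Hpsi in E. simpl in E. unfold pmul, pinv in E. simpl in E.
    injection E as E1 E2. exists g, h. split; auto. rewrite E2. gs. reflexivity.
  - intros [g [h [E1 E2]]]. exists (g, h). rewrite Hpsi. simpl. unfold pmul, pinv; simpl.
    rewrite E1, E2. gs. reflexivity.
Qed.

Lemma tri_proj (u v : prod_group G F) : twisted psi u v -> twisted phi (fst u) (fst v).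
Proof.
  destruct u as [a b], v as [x y]. intro H. apply tri_char in H.
  destruct H as [g [h [E1 _]]]. exists g. auto.
Qed.

Lemma tri_move x y g : twisted psi ((x, y) : prod_group G F) (g ⋅ x ⋅ ginv (phi g), y ⋅ ginv (delta g)).
Proof.
  apply tri_char. exists g, gone. split. reflexivity. rewrite (hom_one halpha). gs. reflexivity.
Qed.

Lemma tri_fib_back x b y : twisted alpha b y -> twisted psi ((x, b) : prod_group G F) (x, y).
Proof.
  intros [h E]. apply tri_char. exists gone, h. rewrite (hom_one hphi), (hom_one hdelta). gs.
  split; auto.
Qed.

Lemma tri_inf_phi : (forall n, ~ n_classes phi n) -> forall n, ~ n_classes psi n.
Proof.
  intros Hinf n Hn. apply (ncl_iff hpsi) in Hn. destruct Hn as [L [_ [_ [_ CL]]]].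
  destruct (ncl_cover hphi) as [m Hm]; [|exact (Hinf m Hm)].
  exists (map fst L). intro x. destruct (CL (x, gone)) as [u [Hu Tu]].
  exists (fst u). split. apply in_map; auto. apply (tri_proj _ _ Tu).
Qed.

Hypothesis H : forall x g, g ⋅ x ⋅ ginv (phi g) = x -> delta g = gone.

Lemma tri_fib x b y : twisted psi ((x, b) : prod_group G F) (x, y) -> twisted alpha b y.
Proof.
  intro T. apply tri_char in T. destruct T as [g [h [E1 E2]]].
  rewrite (H x g) in E2 by auto. exists h. rewrite E2. gs. reflexivity.
Qed.

Lemma NoDup_prod {A B} (l1 : list A) (l2 : list B) : NoDup l1 -> NoDup l2 -> NoDup (list_prod l1 l2).
Proof.
  induction l1 as [|a l1 IH]; intros N1 N2; simpl. constructor.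
  inversion N1; subst. apply NoDup_app; auto.
  - apply NoDup_map_inj; auto. intros x y _ _ E. injection E; auto.
  - intros [x y] Hm Hp. apply in_map_iff in Hm. destruct Hm as [z [E _]]. injection E as <- <-.
    apply in_prod_iff in Hp. destruct Hp. contradiction.
Qed.

Lemma tri_finite lx ly : sepcov (twisted phi) lx -> sepcov (twisted alpha) ly ->
  sepcov (twisted psi) (list_prod lx ly : list (prod_group G F)).
Proof.
  intros [Nx [Sx Cx]] [Ny [Sy Cy]]. split; [|split].
  - apply NoDup_prod; auto.
  - intros [x y] [x' y'] Hu Hv T. apply in_prod_iff in Hu. apply in_prod_iff in Hv.
    destruct Hu, Hv. assert (x = x') by (apply Sx; auto; apply (tri_proj _ _ T)). subst x'.
    f_equal. apply Sy; auto. apply (tri_fib x _ _ T).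
  - intros [x y]. destruct (Cx x) as [x0 [Hx0 [g E]]].
    destruct (Cy (y ⋅ delta g)) as [y1 [Hy1 T1]].
    exists (x0, y1). split. apply in_prod_iff; auto.
    eapply (tw_trans hpsi). apply (tri_fib_back x0 _ _ T1).
    pose proof (tri_move x0 (y ⋅ delta g) g) as T2. rewrite <- E in T2. rewrite mulKr in T2. exact T2.
Qed.

Lemma tri_inf_alpha : (forall n, ~ n_classes alpha n) -> forall n, ~ n_classes psi n.
Proof.
  intros Hinf n Hn. apply (ncl_iff hpsi) in Hn. destruct Hn as [L [_ [_ [_ CL]]]].
  set (c := fun u : prod_group G F => epsilon (inhabits (gone : F)) (fun y0 => twisted psi u (gone, y0))).
  destruct (ncl_cover halpha) as [m Hm]; [|exact (Hinf m Hm)].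
  exists (map c L). intro y. destruct (CL (gone, y)) as [u [Hu Tu]].
  exists (c u). split. apply in_map; auto.
  assert (Tc : twisted psi u (gone, c u)). { apply epsilon_spec. eauto. }
  apply (tri_fib gone). eapply (tw_trans hpsi). apply (tw_sym hpsi). exact Tc. exact Tu.
Qed.
End Tri.


Lemma gpow_one (G : group) n : gpow (gone : G) n = gone.
Proof. induction n; simpl; auto. rewrite IHn. apply gmul1l. Qed.

Lemma gpow_prod (G F : group) (x : G) (y : F) n :
  @gpow (prod_group G F) (x, y) n = (gpow x n, gpow y n).
Proof. induction n; simpl. reflexivity. rewrite IHn. reflexivity. Qed.

Section Struct.
Variables G F : group.
Hypothesis tfG : torsion_free G.
Hypothesis gtF : generated_by_torsion F.
Variable psi : prod_group G F -> prod_group G F.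
Hypothesis apsi : automorphism psi.

Let hpsi : endomorphism psi := proj1 apsi.
Let ipsi : forall x y, psi x = psi y -> x = y := proj1 (proj2 apsi).
Let spsi : forall y, exists x, psi x = y := proj2 (proj2 apsi).

Definition sphi (g : G) : G := fst (psi (g, gone)).
Definition sdelta (g : G) : F := snd (psi (g, gone)).
Definition salpha (f : F) : F := snd (psi (gone, f)).

Lemma psi_mul (u v : prod_group G F) : psi (pmul u v) = pmul (psi u) (psi v).
Proof. apply hpsi. Qed.
Lemma psi_inv (u : prod_group G F) : psi (pinv u) = pinv (psi u).
Proof. apply (hom_inv hpsi). Qed.
Lemma psi_one : psi (gone, gone) = (gone, gone).
Proof. apply (hom_one hpsi). Qed.

Lemma B4 f : fst (psi (gone, f)) = gone.
Proof.
  induction (gtF f) as [x Hx| |x y _ IHx _ IHy|x _ IHx].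
  - destruct Hx as [n [Hn E]].
    assert (T : torsion_elt (psi (gone, x))).
    { exists n. split; auto. rewrite <- (hom_pow hpsi). rewrite gpow_prod, gpow_one, E. apply psi_one. }
    destruct (psi (gone, x)) as [a b] eqn:Ea. simpl. apply tfG.
    destruct T as [m [Hm Em]]. exists m. split; auto. rewrite gpow_prod in Em. injection Em; auto.
  - rewrite psi_one. reflexivity.
  - replace ((gone, x ⋅ y) : prod_group G F) with (@pmul G F (gone, x) (gone, y)) by (unfold pmul; simpl; rewrite gmul1l; auto).
    rewrite psi_mul. unfold pmul. simpl. rewrite IHx, IHy. apply gmul1l.
  - replace ((gone, ginv x) : prod_group G F) with (@pinv G F (gone, x)) by (unfold pinv; simpl; rewrite inv_one; auto).
    rewrite psi_inv. unfold pinv. simpl. rewrite IHx. apply inv_one.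
Qed.

Lemma B5 f : exists y, psi (gone, y) = (gone, f).
Proof.
  induction (gtF f) as [x Hx| |x y _ IHx _ IHy|x _ IHx].
  - destruct Hx as [n [Hn E]]. destruct (spsi (gone, x)) as [[a b] Ez].
    assert (a = gone).
    { apply tfG. exists n. split; auto.
      assert (Ep : psi (gpow ((a, b) : prod_group G F) n) = psi (gone, gone)).
      { rewrite (hom_pow hpsi), Ez, gpow_prod, gpow_one, E, psi_one. reflexivity. }
      apply ipsi in Ep. rewrite gpow_prod in Ep. injection Ep; auto. }
    subst. eauto.
  - exists gone. apply psi_one.
  - destruct IHx as [a Ea]. destruct IHy as [b Eb]. exists (a ⋅ b).
    replace ((gone, a ⋅ b) : prod_group G F) with (@pmul G F (gone, a) (gone, b)) by (unfold pmul; simpl; rewrite gmul1l; auto).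
    rewrite psi_mul, Ea, Eb. unfold pmul; simpl. rewrite gmul1l. reflexivity.
  - destruct IHx as [a Ea]. exists (ginv a).
    replace ((gone, ginv a) : prod_group G F) with (@pinv G F (gone, a)) by (unfold pinv; simpl; rewrite inv_one; auto).
    rewrite psi_inv, Ea. unfold pinv; simpl. rewrite inv_one. reflexivity.
Qed.

Lemma B6 x y f : psi (x, y) = (gone, f) -> x = gone.
Proof.
  intro E. destruct (B5 f) as [y' E']. rewrite <- E' in E. apply ipsi in E. injection E; auto.
Qed.

Lemma Bdecomp g f : psi (g, f) = (sphi g, sdelta g ⋅ salpha f).
Proof.
  replace ((g, f) : prod_group G F) with (@pmul G F (g, gone) (gone, f)) by (unfold pmul; simpl; rewrite gmul1l, gmul1r; auto).
  rewrite psi_mul. unfold pmul, sphi, sdelta, salpha. rewrite B4, gmul1r. reflexivity.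
Qed.

Lemma phi_end : endomorphism sphi.
Proof.
  intros x y. unfold sphi.
  replace ((x ⋅ y, gone) : prod_group G F) with (@pmul G F (x, gone) (y, gone)) by (unfold pmul; simpl; rewrite gmul1l; auto).
  rewrite psi_mul. reflexivity.
Qed.
Lemma delta_hom x y : sdelta (x ⋅ y) = sdelta x ⋅ sdelta y.
Proof.
  unfold sdelta.
  replace ((x ⋅ y, gone) : prod_group G F) with (@pmul G F (x, gone) (y, gone)) by (unfold pmul; simpl; rewrite gmul1l; auto).
  rewrite psi_mul. reflexivity.
Qed.
Lemma alpha_end : endomorphism salpha.
Proof.
  intros x y. unfold salpha.
  replace ((gone, x ⋅ y) : prod_group G F) with (@pmul G F (gone, x) (gone, y)) by (unfold pmul; simpl; rewrite gmul1l; auto).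
  rewrite psi_mul. reflexivity.
Qed.

Lemma alpha_aut : automorphism salpha.
Proof.
  split; [apply alpha_end|split].
  - intros x y E. assert (psi (gone, x) = psi (gone, y)).
    { rewrite !Bdecomp, E. reflexivity. }
    apply ipsi in H. injection H; auto.
  - intro y. destruct (B5 y) as [x E]. exists x. unfold salpha. rewrite E. reflexivity.
Qed.

Lemma phi_aut : automorphism sphi.
Proof.
  split; [apply phi_end|split].
  - intros x y E. apply mul_eq_one.
    apply (B6 (x ⋅ ginv y) (gone ⋅ ginv gone) (sdelta x ⋅ ginv (sdelta y))).
    change ((x ⋅ ginv y, gone ⋅ ginv gone) : prod_group G F) with (@pmul G F (x, gone) (pinv (y, gone))).
    rewrite psi_mul, psi_inv, !Bdecomp. unfold pmul, pinv; simpl. rewrite E, gmulVr.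
    rewrite (hom_one alpha_end), !gmul1r. reflexivity.
  - intro y. destruct (spsi (y, gone)) as [[x f] E]. exists x. rewrite Bdecomp in E.
    injection E; auto.
Qed.

Lemma delta_central g f : sdelta g ⋅ f = f ⋅ sdelta g.
Proof.
  destruct (proj2 (proj2 alpha_aut) f) as [f0 <-].
  assert (E : pmul ((g, gone) : prod_group G F) (gone, f0) = pmul (gone, f0) (g, gone)).
  { unfold pmul; simpl. rewrite !gmul1l, !gmul1r. reflexivity. }
  apply (f_equal psi) in E. rewrite !psi_mul, !Bdecomp in E. unfold pmul in E; simpl in E.
  injection E as _ E. rewrite ?(hom_one alpha_end), ?(hom_one delta_hom), ?gmul1r, ?gmul1l in E.
  exact E.
Qed.
End Struct.


Section C.
Context {G : group}.

Lemma normal_inter (N1 N2 : G -> Prop) : normal_subgroup N1 -> normal_subgroup N2 ->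
  normal_subgroup (fun x => N1 x /\ N2 x).
Proof.
  intros [a1 [b1 [c1 d1]]] [a2 [b2 [c2 d2]]]. repeat split; firstorder.
Qed.

Lemma fi_inter (N1 N2 : G -> Prop) : normal_subgroup N1 -> normal_subgroup N2 ->
  finite_index N1 -> finite_index N2 -> finite_index (fun x => N1 x /\ N2 x).
Proof.
  intros [a1 [b1 [c1 d1]]] [a2 [b2 [c2 d2]]] [l1 H1] [l2 H2].
  set (pick := fun p : G * G => epsilon (inhabits (gone : G))
     (fun z => N1 (ginv (fst p) ⋅ z) /\ N2 (ginv (snd p) ⋅ z))).
  exists (map pick (list_prod l1 l2)). intro g.
  destruct (H1 g) as [h1 [I1 E1]]. destruct (H2 g) as [h2 [I2 E2]].
  assert (P : N1 (ginv h1 ⋅ pick (h1, h2)) /\ N2 (ginv h2 ⋅ pick (h1, h2))).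
  { apply (epsilon_spec (inhabits (gone:G)) (fun z => N1 (ginv (fst (h1,h2)) ⋅ z) /\ N2 (ginv (snd (h1,h2)) ⋅ z))). eauto. }
  exists (pick (h1, h2)). split. apply in_map. apply in_prod_iff; auto.
  destruct P as [P1 P2]. split.
  - replace (ginv (pick (h1,h2)) ⋅ g) with (ginv (ginv h1 ⋅ pick (h1,h2)) ⋅ (ginv h1 ⋅ g)) by (gs; reflexivity).
    auto.
  - replace (ginv (pick (h1,h2)) ⋅ g) with (ginv (ginv h2 ⋅ pick (h1,h2)) ⋅ (ginv h2 ⋅ g)) by (gs; reflexivity).
    auto.
Qed.

Lemma torsion_pow_ne (g : G) : torsion_free G -> g <> gone -> forall i, 0 < i -> gpow g i <> gone.
Proof. intros tf ng i Hi E. apply ng. apply tf. exists i. auto. Qed.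

Lemma resid_many (g : G) : torsion_free G -> residually_finite G -> g <> gone -> forall B,
  exists N, normal_subgroup N /\ finite_index N /\ forall i, 0 < i -> i <= B -> ~ N (gpow g i).
Proof.
  intros tf rf ng B. induction B as [|B IH].
  - exists (fun _ => True). split. repeat split; auto. split.
    exists [gone]. intro x. exists gone. split; simpl; auto. intros i Hi Hb. lia.
  - destruct IH as [N [Nn [Nf Na]]].
    destruct (rf (gpow g (S B))) as [N' [Nn' [Nf' Na']]]. apply torsion_pow_ne; auto; lia.
    exists (fun x => N x /\ N' x). split. apply normal_inter; auto. split. apply fi_inter; auto.
    intros i Hi Hb [Hx Hx']. destruct (Nat.eq_dec i (S B)). subst; auto. apply (Na i); auto. lia.
Qed.

Lemma coset_sep (N : G -> Prop) : normal_subgroup N -> finite_index N ->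
  exists l, sepcov (fun u v => N (ginv u ⋅ v)) l.
Proof.
  intros [a [b [c d]]] [l Hl]. apply cover_sep.
  - intro x. rewrite gmulVl. auto.
  - intros x y Hxy. replace (ginv y ⋅ x) with (ginv (ginv x ⋅ y)) by (gs; reflexivity). auto.
  - intros x y z H1 H2. replace (ginv x ⋅ z) with ((ginv x ⋅ y) ⋅ (ginv y ⋅ z)) by (gs; reflexivity). auto.
  - exists l. exact Hl.
Qed.

Lemma shift_fix (phi : G -> G) (hphi : endomorphism phi) (x g : G) :
  g ⋅ x ⋅ ginv (phi g) = x -> (fun y => x ⋅ phi y ⋅ ginv x) g = g.
Proof. intro E. simpl. rewrite <- E at 1. gs. reflexivity. Qed.

Lemma shift_end (phi : G -> G) (hphi : endomorphism phi) (x : G) :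
  endomorphism (fun y => x ⋅ phi y ⋅ ginv x).
Proof. intros a b. simpl. rewrite hphi. gs. reflexivity. Qed.

Lemma shift_surj (phi : G -> G) (sphi : forall y, exists x, phi x = y) (x : G) :
  forall y, exists z, x ⋅ phi z ⋅ ginv x = y.
Proof. intro y. destruct (sphi (ginv x ⋅ y ⋅ x)) as [z E]. exists z. rewrite E. gs. reflexivity. Qed.

Lemma shift_cover (phi : G -> G) (hphi : endomorphism phi) (x : G) (L : list G) :
  (forall y, exists u, In u L /\ twisted phi u y) ->
  forall y, exists u, In u (map (fun z => z ⋅ ginv x) L) /\ twisted (fun y => x ⋅ phi y ⋅ ginv x) u y.
Proof.
  intros C y. destruct (C (y ⋅ x)) as [u [Hu [h E]]]. exists (u ⋅ ginv x). split. apply (in_map (fun z => z ⋅ ginv x)); auto.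
  exists h. apply (mulcanr x). rewrite E. gs. reflexivity.
Qed.
End C.

From mathcomp Require all_boot all_order all_algebra all_fingroup.

Module MC.
From mathcomp Require Import all_boot all_order all_algebra all_fingroup.
Import GRing.Theory Num.Theory Order.TTheory.

Definition pbool (P : Prop) : bool := if excluded_middle_informative P then true else false.
Lemma pboolP (P : Prop) : pbool P <-> P.
Proof. rewrite /pbool; case: excluded_middle_informative => //; split => //. Qed.

Section Main.
Variable G : Defs.group.
Variable S : list G.
Hypothesis genS : forall x, Defs.generated (fun y => In y S) x.
Variable phi : G -> G.
Hypothesis phi_end : endomorphism phi.
Hypothesis phi_surj : forall y, exists x, phi x = y.
Variable N : G -> Prop.
Hypothesis Nn : normal_subgroup N.
Variable l : list G.
Hypothesis lsep : sepcov (fun u v => N (ginv u ⋅ v)) l.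

Let N1 : N gone := proj1 Nn.
Let NM {x y : G} (a : N x) (b : N y) : N (x ⋅ y) := proj1 (proj2 Nn) x y a b.
Let NV {x : G} (a : N x) : N (ginv x) := proj1 (proj2 (proj2 Nn)) x a.
Let NC (g : G) {x : G} (a : N x) : N (g ⋅ x ⋅ ginv g) := proj2 (proj2 (proj2 Nn)) g x a.

Lemma Ntrans {x y z : G} : N (ginv x ⋅ y) -> N (ginv y ⋅ z) -> N (ginv x ⋅ z).
Proof. move=> h1 h2; have := NM h1 h2; by gs. Qed.
Lemma Nsym {x y : G} : N (ginv x ⋅ y) -> N (ginv y ⋅ x).
Proof. move=> h; have := NV h; by gs. Qed.

Let K := length l.
Definition rep (i : 'I_K) : G := List.nth i l gone.

Lemma rep_in (i : 'I_K) : In (rep i) l.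
Proof. rewrite /rep; apply: nth_In. apply/ssrnat.ltP; exact: ltn_ord. Qed.

Lemma cex z : exists i : 'I_K, N (ginv (rep i) ⋅ z).
Proof.
case: lsep => _ [_ C]; case: (C z) => u [Hu Hz].
case: (In_nth l u gone Hu) => n [Hn E].
exists (Ordinal (introT ssrnat.ltP Hn)); by rewrite /rep /= E.
Qed.

Definition cidx z : 'I_K := proj1_sig (constructive_indefinite_description _ (cex z)).
Lemma c1 z : N (ginv (rep (cidx z)) ⋅ z).
Proof. exact: (proj2_sig (constructive_indefinite_description _ (cex z))). Qed.

Lemma rep_inj i j : N (ginv (rep i) ⋅ rep j) -> i = j.
Proof.
move=> h; case: lsep => ND [Sep _].
have E : rep i = rep j by apply: Sep => //; apply: rep_in.
apply: ord_inj; apply: (proj1 (NoDup_nth l gone) ND); try (apply/ssrnat.ltP; exact: ltn_ord).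
exact: E.
Qed.

Lemma c2 i : cidx (rep i) = i.
Proof. apply: rep_inj; exact: c1. Qed.
Lemma c3 a b : N (ginv a ⋅ b) -> cidx a = cidx b.
Proof.
move=> h; apply: rep_inj; apply: (Ntrans (c1 a)); apply: (Ntrans h); apply: Nsym; exact: c1.
Qed.
Lemma c4 a b : cidx a = cidx b -> N (ginv a ⋅ b).
Proof.
move=> e; apply: (Ntrans (Nsym (c1 a))); rewrite e; exact: c1.
Qed.

Definition sgm (z : G) (i : 'I_K) : 'I_K := cidx (ginv z ⋅ rep i).
Lemma sig_inj z : injective (sgm z).
Proof.
move=> i j /c4 h; apply: rep_inj; move: h; by gs.
Qed.
Definition sigP z : {perm 'I_K} := perm (sig_inj z).

Lemma sigPM x y : sigP (x ⋅ y) = (sigP x * sigP y)%g.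
Proof.
apply/permP => i; rewrite permM !permE /sgm; symmetry; apply: c3.
have h := c1 (ginv x ⋅ rep i).
move: h; set r := rep _; move=> h.
have : N (ginv (ginv y ⋅ r) ⋅ (ginv (x ⋅ y) ⋅ rep i)) by move: h; gs.
done.
Qed.
Lemma sigP1 : sigP gone = 1%g.
Proof. apply/permP => i; rewrite perm1 permE /sgm; gs; exact: c2. Qed.
Lemma sigPV x : sigP (ginv x) = (sigP x)^-1%g.
Proof. apply/eqP; rewrite eq_sym eq_invg_mul -sigPM gmulVr sigP1 //. Qed.

Lemma sig_ker z : sigP z = 1%g -> N z.
Proof.
move=> e; have : sigP z (cidx gone) = cidx gone by rewrite e perm1.
rewrite permE /sgm => e2.
have h := c1 (gone : G); rewrite gmul1r in h.
set r := rep (cidx gone) in h e2.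
have h2 : N (ginv (ginv z ⋅ r) ⋅ r) by apply: c4; rewrite e2 /r c2.
have hr : N r by have := NV h; rewrite inv_inv.
have := NC r h2; gs; done.
Qed.

Lemma iter_end t : endomorphism (iter t phi).
Proof. elim: t => [|t IH] x y //=. by rewrite IH phi_end. Qed.

Lemma iter_surj t y : exists x, iter t phi x = y.
Proof.
elim: t y => [|t IH] y; first by exists y.
have [z <-] := phi_surj y; have [x <-] := IH z; by exists x.
Qed.

Let m := length S.
Definition tup (t : nat) : {ffun 'I_m -> {perm 'I_K}} :=
  [ffun j : 'I_m => sigP (iter t phi (List.nth j S gone))].

Lemma pigeon : exists a b, a < b /\ tup a = tup b.
Proof.
pose C := #|{ffun 'I_m -> {perm 'I_K}}|.
pose f := fun t : 'I_C.+1 => tup t.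
case: (boolP (injectiveb f)) => [/injectiveP inj | /injectivePn [x [y nxy exy]]].
  by have := leq_card _ inj; rewrite card_ord ltnn.
have nxy' : (x : nat) != y by [].
case: (ltngtP x y) => h.
- by exists x, y.
- by exists y, x.
- by rewrite h eqxx in nxy'.
Qed.

Lemma agree a b : tup a = tup b -> forall x, sigP (iter a phi x) = sigP (iter b phi x).
Proof.
move=> E x; elim: (genS x) => {x} [y Hy| |y z _ IHy _ IHz|y _ IHy].
- case: (In_nth S y gone Hy) => n [Hn Ey].
  have := congr1 (fun F : {ffun 'I_m -> {perm 'I_K}} => F (@Ordinal m n (introT ssrnat.ltP Hn))) E; rewrite !ffunE /= Ey; done.
- by rewrite (hom_one (iter_end a)) (hom_one (iter_end b)).
- by rewrite (iter_end a) (iter_end b) !sigPM IHy IHz.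
- by rewrite (hom_inv (iter_end a)) (hom_inv (iter_end b)) !sigPV IHy.
Qed.

Lemma period_ex : exists p, 0 < p /\ forall y, sigP y = sigP (iter p phi y).
Proof.
have [a [b [ab E]]] := pigeon.
exists (b - a); split; first by rewrite subn_gt0.
move=> y; have [x <-] := iter_surj a y.
by rewrite -iterD subnK ?(ltnW ab) // (agree _ _ E).
Qed.

Section Rho.
Variable p : nat.
Hypothesis hp : 0 < p.
Hypothesis period : forall y, sigP y = sigP (iter p phi y).

Definition rhof (x : G) (u : 'I_p * 'I_K) : 'I_p * 'I_K := (u.1, sigP (iter u.1 phi x) u.2).
Lemma rho_inj x : injective (rhof x).
Proof.
move=> [i c] [j d]; rewrite /rhof /= => [[eij]]; rewrite eij => ecd.
by rewrite (perm_inj ecd).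
Qed.
Definition rho x : {perm 'I_p * 'I_K} := perm (rho_inj x).

Lemma rhoM x y : rho (x ⋅ y) = (rho x * rho y)%g.
Proof. apply/permP => -[i c]; by rewrite permM !permE /rhof /= (iter_end i) sigPM permM. Qed.
Lemma rho1 : rho gone = 1%g.
Proof. apply/permP => -[i c]; by rewrite perm1 permE /rhof /= (hom_one (iter_end i)) sigP1 perm1. Qed.
Lemma rhoV x : rho (ginv x) = (rho x)^-1%g.
Proof. apply/eqP; rewrite eq_sym eq_invg_mul -rhoM gmulVr rho1 //. Qed.

Lemma rho_comp x y : rho x = rho y -> forall i : 'I_p, sigP (iter i phi x) = sigP (iter i phi y).
Proof.
move=> E i; apply/permP => c.
have := congr1 (fun r : {perm 'I_p * 'I_K} => r (i, c)) E; rewrite !permE /rhof /=.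
move=> [] h; move: h; rewrite !permE; done.
Qed.

Lemma sgm_eq {x y : G} : sigP x = sigP y -> forall c, sgm x c = sgm y c.
Proof. move=> E c; have := congr1 (fun s : {perm 'I_K} => s c) E; by rewrite !permE. Qed.

Lemma rho_phi x y : rho x = rho y -> rho (phi x) = rho (phi y).
Proof.
move=> E; apply/permP => -[i c]; rewrite !permE /rhof /= -!iterSr.
case: (ltnP i.+1 p) => h.
  by congr (_, _); exact: (congr1 (fun s : {perm 'I_K} => s c) (rho_comp _ _ E (Ordinal h))).
have ei : i.+1 = p by apply/eqP; rewrite eqn_leq h ltn_ord.
rewrite ei -!period; have := rho_comp _ _ E (Ordinal hp); rewrite /= => ->; done.
Qed.

Lemma rho_ker z : rho z = 1%g -> N z.
Proof.
move=> E; apply: sig_ker; rewrite -rho1 in E.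
have := rho_comp _ _ E (Ordinal hp); rewrite /= sigP1; done.
Qed.

Definition Qset : {set {perm 'I_p * 'I_K}} := [set t | pbool (exists x, rho x = t)].
Lemma inQ t : (t \in Qset) <-> exists x, rho x = t.
Proof. rewrite inE; exact: pboolP. Qed.
Lemma rho_inQ x : rho x \in Qset.
Proof. apply/inQ; by exists x. Qed.
Lemma Qgs : group_set Qset.
Proof.
apply/group_setP; split; first by rewrite -rho1; exact: rho_inQ.
move=> a b /inQ [x <-] /inQ [y <-]; rewrite -rhoM; exact: rho_inQ.
Qed.
Definition Qg : {group {perm 'I_p * 'I_K}} := group Qgs.

Definition pre (t : {perm 'I_p * 'I_K}) : G := epsilon (inhabits gone) (fun x => rho x = t).
Lemma preP t : t \in Qset -> rho (pre t) = t.
Proof. move/inQ => h; exact: (epsilon_spec (inhabits gone) (fun x => rho x = t) h). Qed.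
Definition phib t := rho (phi (pre t)).
Lemma phib_rho x : phib (rho x) = rho (phi x).
Proof. apply: rho_phi; apply: preP; exact: rho_inQ. Qed.
Lemma phibM a b : a \in Qset -> b \in Qset -> phib (a * b)%g = (phib a * phib b)%g.
Proof. move=> /inQ [x <-] /inQ [y <-]; by rewrite -rhoM !phib_rho phi_end rhoM. Qed.

Definition tact (t q : {perm 'I_p * 'I_K}) := (q^-1 * t * phib q)%g.
Lemma tact_is_action : is_action Qg tact.
Proof.
split.
  move=> q x y; rewrite /tact => /mulIg /mulgI; done.
move=> x a b aQ bQ; rewrite /tact phibM // invMg !mulgA //.
Qed.
Definition tA := Action tact_is_action.

Lemma tacts : [acts Qg, on Qg | tA].
Proof.
apply/subsetP => a aQ; rewrite inE; apply/andP; split; first exact: aQ. rewrite inE. apply/subsetP => x xQ; rewrite inE /= /tact.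
change ((a^-1 * x * phib a)%g \in Qg). rewrite groupM ?groupM ?groupV //; exact: rho_inQ.
Qed.

Section Count.
Variable L : list G.
Hypothesis Lcov : forall x, exists u, In u L /\ twisted phi u x.
Variable g : G.
Hypothesis gfix : phi g = g.
Variable B : nat.
Hypothesis HB : forall s : seq nat, (size s <= length L)%N -> all (fun d => 0 < d)%N s ->
  (\sum_(d <- s) (d%:R : rat)^-1 = 1)%R -> all (fun d => d <= B)%N s.
Hypothesis avoid : forall i, (0 < i)%N -> (i <= B)%N -> ~ N (gpow g i).

Let P := orbit tA Qg @: (Qg : {set _}).

Lemma gpow_add (a b : nat) : gpow g (a + b) = gpow g a ⋅ gpow g b.
Proof. elim: a => [|a IH] /=; first by rewrite gmul1l. by rewrite IH gmulA. Qed.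

Lemma rpow_inj : injective (fun i : 'I_B.+1 => rho (gpow g i)).
Proof.
have key : forall i j : nat, (i < j)%N -> (j <= B)%N -> rho (gpow g i) <> rho (gpow g j).
  move=> i j ij jB E.
  have ej : j = (i + (j - i))%N by rewrite subnKC // ltnW.
  move: E; rewrite ej gpow_add rhoM => /esym E.
  have E1 : rho (gpow g (j - i)) = 1%g.
    by apply: (mulgI (rho (gpow g i))); rewrite mulg1.
  apply: (avoid (j - i)%N); first by rewrite subn_gt0.
    by apply: leq_trans (leq_subr _ _) jB.
  exact: rho_ker E1.
move=> i j /= E; apply: val_inj => /=.
case: (ltngtP i j) => h //.
- by exfalso; apply: (key i j h _ E); rewrite -ltnS.
- by exfalso; apply: (key j i h _ (esym E)); rewrite -ltnS.
Qed.

Lemma stab_big : (B.+1 <= #|('C_Qg[1 | tA])%g|)%N.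
Proof.
have -> : B.+1 = #|(fun i : 'I_B.+1 => rho (gpow g i)) @: [set: 'I_B.+1]|.
  by rewrite card_imset ?cardsT ?card_ord //; exact: rpow_inj.
apply: subset_leq_card; apply/subsetP => q /imsetP [i _ ->].
rewrite !inE; apply/and3P; split; try (apply/pboolP; by eexists).
rewrite sub1set inE /= /tact; apply/eqP.
rewrite phib_rho (hom_pow phi_end) gfix mulg1 mulVg //.
Qed.

Lemma orbit_cover Ob : Ob \in P -> exists i : 'I_(length L), Ob = orbit tA Qg (rho (List.nth i L gone)).
Proof.
move=> /imsetP [t tQ ->].
have [y ey] : exists y, rho y = t by apply/inQ.
have [u [uL [h eh]]] := Lcov y.
have [n [hn en]] := In_nth L u gone uL.
exists (Ordinal (introT ssrnat.ltP hn)); rewrite /= en.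
apply/(orbit_in_eqP (subxx Qg)); apply/orbitP; exists (rho (ginv h)); first exact: rho_inQ.
rewrite /= /tact phib_rho rhoV invgK (hom_inv phi_end) -!rhoM -ey eh //.
Qed.

Lemma P_card : (#|P| <= length L)%N.
Proof.
apply: leq_trans (_ : #|(fun i : 'I_(length L) => orbit tA Qg (rho (List.nth i L gone))) @: [set: 'I_(length L)]| <= _)%N.
  apply: subset_leq_card; apply/subsetP => Ob /orbit_cover [i ->]; apply: imset_f; exact: in_setT.
by apply: leq_trans (leq_imset_card _ _) _; rewrite cardsT card_ord.
Qed.

Definition dd (Ob : {set {perm 'I_p * 'I_K}}) : nat := (#|Qg| %/ #|Ob|)%N.

Lemma dd_spec Ob : Ob \in P -> (0 < #|Ob|)%N /\ (dd Ob * #|Ob| = #|Qg|)%N.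
Proof.
move=> /imsetP [x xQ ->].
have hc := card_orbit_in_stab tA x (subxx Qg).
have pos : (0 < #|orbit tA Qg x|)%N by apply/card_gt0P; exists x; exact: orbit_refl.
split=> //; rewrite /dd -{1}hc mulKn // mulnC //.
Qed.

Lemma contradiction_main : False.
Proof.
have Qpos : (0 < #|Qg|)%N by apply/card_gt0P; exists 1%g; exact: group1.
have hsum : (\sum_(Ob in P) #|Ob|)%N = #|Qg| := acts_sum_card_orbit tacts.
have hall := HB [seq dd Ob | Ob <- enum P].
have O1P : orbit tA Qg 1%g \in P by apply: imset_f; exact: group1.
have d1 : (B.+1 <= dd (orbit tA Qg 1%g))%N.
  rewrite /dd -(card_orbit_in_stab tA 1%g (subxx Qg)) mulKn; first exact: stab_big.
  by apply/card_gt0P; exists 1%g; exact: orbit_refl.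
have : all (fun d => d <= B)%N [seq dd Ob | Ob <- enum P].
  apply: hall.
  - by rewrite size_map -cardE; exact: P_card.
  - apply/allP => d /mapP [Ob OP ->]; rewrite mem_enum in OP.
    have [h1 h2] := dd_spec _ OP; move: Qpos; rewrite -h2 muln_gt0 => /andP [] //.
  - rewrite big_map big_enum /=.
    have -> : (\sum_(Ob in P) ((dd Ob)%:R : rat)^-1 = \sum_(Ob in P) (#|Ob|%:R / #|Qg|%:R))%R.
      apply: eq_bigr => Ob OP; have [h1 h2] := dd_spec _ OP.
      rewrite -h2 natrM invfM mulrCA divff ?mulr1 //; by rewrite pnatr_eq0 -lt0n.
    rewrite -mulr_suml -natr_sum hsum divff //; by rewrite pnatr_eq0 -lt0n.
move=> /allP /(_ (dd (orbit tA Qg 1%g))).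
have -> : dd (orbit tA Qg 1%g) \in [seq dd Ob | Ob <- enum P] by apply: map_f; rewrite mem_enum.
move=> /(_ isT) h; move: (leq_trans d1 h); by rewrite ltnn.
Qed.
End Count.
End Rho.
End Main.
Section Egypt.
Set Implicit Arguments. Unset Strict Implicit.
Local Open Scope ring_scope.
Lemma sum_le_const (s : seq nat) (c : rat) :
  (forall d, d \in s -> (d%:R)^-1 <= c) -> \sum_(d <- s) (d%:R : rat)^-1 <= (size s)%:R * c.
Proof.
elim: s => [|a s IH] h; first by rewrite big_nil mul0r.
rewrite big_cons /= -natr1 mulrDl mul1r [X in _ <= X]addrC.
apply: lerD; first by apply: h; rewrite inE eqxx.
by apply: IH => d hd; apply: h; rewrite inE hd orbT.
Qed.

Lemma egypt_gen (n : nat) : forall r : rat, 0 < r -> exists B : nat, forall s : seq nat,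
  (size s <= n)%N -> all (fun d => 0 < d)%N s -> \sum_(d <- s) (d%:R : rat)^-1 = r ->
  all (fun d => d <= B)%N s.
Proof.
elim: n => [|n IH] r r0.
  exists 0%N => s; rewrite leqn0 => /nilP -> _; rewrite big_nil => h.
  by move: r0; rewrite -h ltxx.
pose P (q : rat) (B : nat) := forall s : seq nat, (size s <= n)%N -> all (fun d => 0 < d)%N s ->
  \sum_(d <- s) (d%:R : rat)^-1 = q -> all (fun d => d <= B)%N s.
have Pmono q B B' : (B <= B')%N -> P q B -> P q B'.
  move=> le hP s h1 h2 h3; apply: sub_all (hP s h1 h2 h3) => d /= hd; exact: leq_trans hd le.
have step v : exists Bv, 0 < r - (v%:R)^-1 -> P (r - (v%:R)^-1) Bv.
  case: (boolP (0 < r - (v%:R)^-1)) => h; last by exists 0%N.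
  by have [B HB] := IH _ h; exists B.
have comb K : exists B0, forall v, (v <= K)%N -> 0 < r - (v%:R)^-1 -> P (r - (v%:R)^-1) B0.
  elim: K => [|K [B1 HB1]].
    have [B HB] := step 0%N; exists B => v; rewrite leqn0 => /eqP ->; exact: HB.
  have [B2 HB2] := step K.+1; exists (maxn B1 B2) => v; rewrite leq_eqVlt ltnS => /orP [/eqP ->|hv] h.
    by apply: Pmono (HB2 h); apply: leq_maxr.
  by apply: Pmono (HB1 v hv h); apply: leq_maxl.
pose M := Num.Def.archi_bound ((n.+1)%:R / r).
have HM : (n.+1)%:R / r < M%:R by apply: archi_boundP; apply: divr_ge0 => //; exact: ltW.
have [B0 HB0] := comb M.
exists (maxn M B0) => s hsz hpos hsum.
have hex : has (fun d => d <= M)%N s.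
  apply/negPn/negP => /hasPn hn.
  have hall : forall d, d \in s -> (d%:R : rat)^-1 <= (M.+1%:R)^-1.
    move=> d hd; have hdm := hn d hd.
    have dpos : (0 < d)%N by move/allP: hpos; apply.
    rewrite lef_pV2 ?posrE ?ltr0n // ler_nat; by rewrite ltnNge.
  have := sum_le_const hall; rewrite hsum => hle.
  have : (size s)%:R * (M.+1%:R)^-1 <= (n.+1)%:R * (M.+1%:R)^-1 :> rat.
    by apply: ler_wpM2r; [rewrite invr_ge0 ler0n | rewrite ler_nat].
  move=> hle2; have := le_trans hle hle2.
  rewrite -[_ * _^-1]/((n.+1)%:R / (M.+1)%:R) ler_pdivlMr ?ltr0n //.
  move: HM; rewrite ltr_pdivrMr // => HM h2.
  have : (n.+1)%:R < r * (M.+1)%:R :> rat.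
    apply: lt_le_trans HM _; rewrite mulrC; apply: ler_wpM2l; first exact: ltW.
    by rewrite ler_nat.
  by rewrite ltNge h2.
have [d ds dM] := hasP hex.
have dpos : (0 < d)%N by move/allP: hpos; apply.
have hperm := perm_to_rem ds.
have hsum' : \sum_(e <- rem d s) (e%:R : rat)^-1 = r - (d%:R)^-1.
  by rewrite -hsum (perm_big _ hperm) big_cons addrC addKr.
apply/allP => e es.
have : e \in d :: rem d s by rewrite -(perm_mem hperm).
rewrite inE => /orP [/eqP -> | er]; first by apply: leq_trans dM (leq_maxl _ _).
have Hrem : all (fun d0 => d0 <= B0)%N (rem d s) -> (e <= maxn M B0)%N.
  by move=> /allP /(_ e er) h; exact: leq_trans h (leq_maxr _ _).
apply: Hrem; apply: (HB0 d dM); last first.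
- by [].
- by apply/allP => y yr; move/allP: hpos; apply; apply: (mem_rem yr).
- by rewrite size_rem //; move: hsz; case: (size s).
move: hsum'; case hr: (rem d s) => [|x s''] hsum'; first by move: er; rewrite hr.
have xpos : (0 < x)%N.
  by move/allP: hpos; apply; apply: (mem_rem (x:=d)); rewrite hr inE eqxx.
rewrite -hsum' big_cons; apply: ltr_wpDr; first by apply: sumr_ge0 => i _; rewrite invr_ge0 ler0n.
by rewrite invr_gt0 ltr0n.
Qed.
End Egypt.

Lemma fix_trivial (G : Defs.group) : finitely_generated G -> torsion_free G -> residually_finite G ->
  forall phi, endomorphism phi -> (forall y, exists x, phi x = y) ->
  forall L : list G, (forall x, exists u, In u L /\ twisted phi u x) ->
  forall g, phi g = g -> g = gone.
Proof.
move=> [S genS] tf rf phi he hs L Lc g gf.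
case: (classic (g = gone)) => // ng; exfalso.
have [B HB] := @egypt_gen (length L) 1%R ltr01.
have [N [Nn [Nf Na]]] := resid_many g tf rf ng B.
have [l ls] := coset_sep N Nn Nf.
have [p [hp per]] := @period_ex G S genS phi he hs N Nn l ls.
apply: (@contradiction_main G phi he N Nn l ls p hp per L Lc g gf B HB).
move=> i i0 iB; apply: Na; [exact/ssrnat.ltP | exact/ssrnat.leP].
Qed.
End MC.


Lemma reid_exists (G : group) (psi : G -> G) : exists r, reidemeister psi r.
Proof.
  destruct (classic (exists n, n_classes psi n)) as [[n Hn]|Hn].
  - exists (Some n). exact Hn.
  - exists None. intros n H. apply Hn. eauto.
Qed.

Lemma reid_unique (G : group) (psi : G -> G) (hpsi : endomorphism psi) r1 r2 :
  reidemeister psi r1 -> reidemeister psi r2 -> r1 = r2.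
Proof.
  destruct r1 as [a|], r2 as [b|]; simpl; intros H1 H2.
  - f_equal. apply (ncl_unique hpsi H1 H2).
  - exfalso. exact (H2 a H1).
  - exfalso. exact (H1 b H2).
  - reflexivity.
Qed.

Lemma sep_cover {A} (R : A -> A -> Prop) l : sepcov R l -> forall x, exists u, In u l /\ R u x.
Proof. intros [_ [_ C]]. exact C. Qed.

Lemma tri_value (G F : group) phi alpha delta (psi : prod_group G F -> prod_group G F)
  (hphi : endomorphism phi) (halpha : endomorphism alpha)
  (hdelta : forall x y, delta (x ⋅ y) = delta x ⋅ delta y) (hpsi : endomorphism psi)
  (Hpsi : forall g f, psi (g, f) = (phi g, delta g ⋅ alpha f))
  (Hcond : forall a, n_classes phi a -> forall x g, g ⋅ x ⋅ ginv (phi g) = x -> delta g = gone)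
  rp ra : reidemeister phi rp -> reidemeister alpha ra -> reidemeister psi (omul rp ra).
Proof.
  intros Rp Ra. destruct rp as [a|]; simpl.
  - pose proof (Hcond a Rp) as H. destruct ra as [b|]; simpl in *.
    + apply (ncl_iff hphi) in Rp. apply (ncl_iff halpha) in Ra.
      destruct Rp as [lx [<- Sx]]. destruct Ra as [ly [<- Sy]].
      apply (ncl_iff hpsi). exists (list_prod lx ly). split. apply length_prod.
      apply (tri_finite G F phi alpha delta psi hphi halpha hdelta hpsi Hpsi H); auto.
    + apply (tri_inf_alpha G F phi alpha delta psi halpha hpsi Hpsi H Ra).
  - apply (tri_inf_phi G F phi alpha delta psi hphi hpsi Hpsi Rp).
Qed.

Theorem mainTheorem13 (G F : group) :
  finitely_generated G -> torsion_free G -> residually_finite G ->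
  generated_by_torsion F ->
  forall r : option nat,
    SpecR (prod_group G F) r <-> set_mul (@SpecR G) (@SpecR F) r.
Proof.
  intros fg tf rf gt r. split.
  - intros [psi [apsi Rpsi]].
    pose proof (phi_aut G F tf gt psi apsi) as aphi.
    pose proof (alpha_aut G F tf gt psi apsi) as aalpha.
    destruct (reid_exists _ (sphi G F psi)) as [rp Rp].
    destruct (reid_exists _ (salpha G F psi)) as [ra Ra].
    exists rp, ra. split. exists (sphi G F psi). auto. split. exists (salpha G F psi). auto.
    apply (reid_unique _ _ (proj1 apsi) _ _ Rpsi).
    apply (tri_value G F (sphi G F psi) (salpha G F psi) (sdelta G F psi) psi (proj1 aphi) (proj1 aalpha)
             (delta_hom G F psi apsi) (proj1 apsi) (Bdecomp G F tf gt psi apsi)); auto.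
    intros a Ha x g E.
    apply (ncl_iff (proj1 aphi)) in Ha. destruct Ha as [L [_ SL]].
    pose proof (sep_cover _ _ SL) as CL.
    assert (g = gone).
    { apply (MC.fix_trivial fg tf rf (shift_end _ (proj1 aphi) x) (shift_surj _ (proj2 (proj2 aphi)) x)
              (shift_cover _ (proj1 aphi) x L CL)).
      apply shift_fix; auto. apply (proj1 aphi). }
    subst g. apply (hom_one (delta_hom G F psi apsi)).
  - intros [rp [ra [[phi [aphi Rp]] [[alpha [aalpha Ra]] ->]]]].
    set (psi := fun u : prod_group G F => ((phi (fst u), alpha (snd u)) : prod_group G F)).
    assert (hpsi : endomorphism psi).
    { intros [a b] [c d]. unfold psi; simpl. unfold pmul; simpl. rewrite (proj1 aphi), (proj1 aalpha). reflexivity. }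
    exists psi. split.
    + split; [exact hpsi|split].
      * intros [a b] [c d] E. unfold psi in E; simpl in E. injection E as E1 E2.
        apply (proj1 (proj2 aphi)) in E1. apply (proj1 (proj2 aalpha)) in E2. subst. reflexivity.
      * intros [y z]. destruct (proj2 (proj2 aphi) y) as [a Ea]. destruct (proj2 (proj2 aalpha) z) as [b Eb].
        exists (a, b). unfold psi; simpl. rewrite Ea, Eb. reflexivity.
    + apply (tri_value G F phi alpha (fun _ => gone) psi (proj1 aphi) (proj1 aalpha)); auto.
      * intros. rewrite gmul1l. reflexivity.
      * intros g f. unfold psi; simpl. rewrite gmul1l. reflexivity.
Qed.
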